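(* Let $E$ be a Hermite–Biehler entire function with no real zeros whose phase function satisfies $\varphi'\in L^\infty(\mathbb{R})$. There exists $\delta>0$, depending only on $\lVert\varphi'\rVert_\infty$, such that for every $\xi\in\mathbb{R}$ and every $\alpha\in[0,\pi)$ with $\lvert A_\alpha(\xi)\rvert=\lvert E(\xi)\rvert$ there is an interval $I=(a,b)$ containing $\xi$ with $\xi-a>\delta$, $b-\xi>\delta$, and $$\left\lvert\frac{A_\alpha(x)}{E(x)}\right\rvert^2\ge\frac12,\qquad x\in I.$$
   Context: An entire function $E$ is Hermite–Biehler if $\lvert E(\overline{z})\rvert < \lvert E(z)\rvert$ for $z$ in the upper half-plane $\mathbb{C}_+$. Let $E^{\#}(z)=\overline{E(\overline z)}$; the phase function $\varphi$ is a smooth real function on $\mathbb{R}$ with $E^{\#}(x)/E(x)=e^{i\varphi(x)}$ (equivalently $\varphi=-2\arg E$ on $\mathbb{R}$). For $\alpha\in\mathbb{R}$, $A_\alpha=(e^{i\alpha}E+e^{-i\alpha}E^{\#})/2$ is the real part of $e^{i\alpha}E$. *)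

(* Defs.v *)
From Stdlib Require Import Reals.
From Coquelicot Require Import Coquelicot.
Open Scope R_scope.

Notation CC := Coquelicot.Complex.C.

Definition expi (t : R) : CC := (cos t, sin t).

Definition entire (E : CC -> CC) : Prop :=
  forall z : CC, @ex_derive C_AbsRing C_NormedModule E z.

Definition Esharp (E : CC -> CC) (z : CC) : CC := Cconj (E (Cconj z)).

Definition hermite_biehler (E : CC -> CC) : Prop :=
  entire E /\ forall z : CC, 0 < Im z -> Cmod (E (Cconj z)) < Cmod (E z).

Definition phase_function (E : CC -> CC) (phi : R -> R) : Prop :=
  (forall (n : nat) (x : R), ex_derive_n phi n x) /\
  forall x : R, Cdiv (Esharp E (RtoC x)) (E (RtoC x)) = expi (phi x).

Definition A_alpha (E : CC -> CC) (alpha : R) (z : CC) : CC :=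
  Cdiv (Cplus (Cmult (expi alpha) (E z))
              (Cmult (expi (- alpha)) (Esharp E z))) (RtoC 2).

(* ||phi'||_oo = M (phi' continuous, so the essential sup is the sup). *)
Definition sup_norm_deriv_eq (phi : R -> R) (M : R) : Prop :=
  (forall x : R, Rabs (Derive phi x) <= M) /\
  (forall eps : R, 0 < eps -> exists x : R, M - eps < Rabs (Derive phi x)).

(* Main.v *)
Require Import Defs.
From Stdlib Require Import Reals Lra.
From Coquelicot Require Import Coquelicot.
Open Scope R_scope.

Lemma key (E : CC -> CC) (phi : R -> R) (alpha x : R) :
  E (RtoC x) <> RtoC 0 ->
  Cdiv (Esharp E (RtoC x)) (E (RtoC x)) = expi (phi x) ->
  Cmod (Cdiv (A_alpha E alpha (RtoC x)) (E (RtoC x))) ^ 2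
    = (1 + cos (phi x - 2 * alpha)) / 2.
Proof.
  intros Hn Hp. unfold Cmod at 1; rewrite pow2_sqrt by (apply Rplus_le_le_0_compat; apply pow2_ge_0).
  replace (1 + cos (phi x - 2 * alpha)) with
    ((sin alpha ^ 2 + cos alpha ^ 2) + cos (phi x - 2 * alpha))
    by (generalize (sin2_cos2 alpha); unfold Rsqr; intro; simpl; nra).
  rewrite cos_minus, cos_2a, sin_2a.
  unfold A_alpha, Esharp in *.
  assert (Hc : Cconj (RtoC x) = RtoC x).
  { unfold Cconj, RtoC; simpl; rewrite Ropp_0; reflexivity. }
  rewrite Hc in *.
  destruct (E (RtoC x)) as [u v] eqn:He.
  assert (Hd : u ^ 2 + v ^ 2 <> 0).
  { intro H0. apply Hn. assert (u = 0) by nra. assert (v = 0) by nra. subst; reflexivity. }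
  unfold Cdiv, expi, Cconj, Cmult, Cinv, Cplus, RtoC in *; simpl in *.
  injection Hp; intros Hq Hpp.
  rewrite <- Hq, <- Hpp, cos_neg, sin_neg.
  field. intro H; apply Hd; rewrite !Rmult_1_r; exact H.
Qed.

Theorem lemma7 :
  forall M : R, exists delta : R, 0 < delta /\
    forall (E : CC -> CC) (phi : R -> R),
      hermite_biehler E ->
      (forall x : R, E (RtoC x) <> RtoC 0) ->
      phase_function E phi ->
      sup_norm_deriv_eq phi M ->
      forall (xi alpha : R), 0 <= alpha < PI ->
        Cmod (A_alpha E alpha (RtoC xi)) = Cmod (E (RtoC xi)) ->
        exists a b : R, a < xi < b /\ xi - a > delta /\ b - xi > delta /\
          forall x : R, a < x < b ->
            Cmod (Cdiv (A_alpha E alpha (RtoC x)) (E (RtoC x))) ^ 2 >= 1 / 2.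
Proof.
  intros M.
  assert (HM1 : 0 < Rabs M + 1) by (generalize (Rabs_pos M); lra).
  exists (/ (2 * (Rabs M + 1))). split.
  { apply Rinv_0_lt_compat; lra. }
  intros E phi _ Hnz [Hsm Hph] [Hb _] xi alpha _ Heq.
  set (r := / (Rabs M + 1)).
  assert (Hr : 0 < r) by (apply Rinv_0_lt_compat; lra).
  assert (Hr2 : / (2 * (Rabs M + 1)) = r / 2) by (unfold r; field; lra).
  assert (HMr : Rabs M * r < 1).
  { unfold r. apply (Rmult_lt_reg_r (Rabs M + 1)); auto.
    rewrite Rmult_assoc, Rinv_l by lra. lra. }
  exists (xi - r), (xi + r). rewrite Hr2.
  split; [lra|]. split; [lra|]. split; [lra|].
  intros x Hx.
  assert (Hxi : cos (phi xi - 2 * alpha) = 1).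
  { pose proof (key E phi alpha xi (Hnz xi) (Hph xi)) as K.
    rewrite Cmod_div in K by apply Hnz.
    rewrite Heq, Rdiv_diag in K.
    - lra.
    - intro H0. apply (Hnz xi). apply Cmod_eq_0. exact H0. }
  assert (Hsxi : sin (phi xi - 2 * alpha) = 0).
  { generalize (sin2_cos2 (phi xi - 2 * alpha)). rewrite Hxi. unfold Rsqr. intro.
    nra. }
  assert (Hder : forall y, ex_derive phi y) by (intro y; exact (Hsm 1%nat y)).
  destruct (MVT_gen phi xi x (Derive phi)) as [c [_ Hc]].
  { intros y _. apply Derive_correct. apply Hder. }
  { intros y _. apply continuity_pt_filterlim. apply (@ex_derive_continuous R_AbsRing R_NormedModule). apply Hder. }
  set (d := phi x - phi xi).
  assert (Hd : Rabs d < 1).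
  { unfold d. rewrite Hc, Rabs_mult.
    apply Rle_lt_trans with (Rabs M * r); auto.
    apply Rmult_le_compat; try apply Rabs_pos.
    - apply Rle_trans with M; [apply Hb | apply RRle_abs].
    - apply Rabs_le; lra. }
  assert (Hcos : 0 < cos (phi x - 2 * alpha)).
  { replace (phi x - 2 * alpha) with (d + (phi xi - 2 * alpha)) by (unfold d; ring).
    rewrite cos_plus, Hxi, Hsxi.
    assert (0 < cos d).
    { apply Rabs_def2 in Hd. generalize PI2_3_2; intro. apply cos_gt_0; lra. }
    lra. }
  rewrite (key E phi alpha x (Hnz x) (Hph x)). lra.
Qed.
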